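(* For integers $j,k,l>1$ let $G_{j,k,l}$ be the group with presentation $\langle x,y,z \mid x^j=e,\ y^k=e,\ xy=z^l\rangle$. Then $G_{j,k,l}$ is solvable if and only if $j=k=l=2$. Moreover $G_{2,2,2}$ is polycyclic. *)

(* Defs.v *)
From Stdlib Require Import ZArith.

Record Group := {
  carrier :> Type;
  gmul : carrier -> carrier -> carrier;
  ginv : carrier -> carrier;
  gone : carrier;
  gmul_assoc : forall a b c, gmul a (gmul b c) = gmul (gmul a b) c;
  gmul_1l : forall a, gmul gone a = a;
  gmul_Vl : forall a, gmul (ginv a) a = gone
}.

Arguments gmul {g}. Arguments ginv {g}. Arguments gone {g}.

Fixpoint gpow {G : Group} (a : G) (n : nat) : G :=
  match n with O => gone | S m => gmul a (gpow a m) end.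

Definition gzpow {G : Group} (a : G) (m : Z) : G :=
  match m with
  | Z0 => gone
  | Zpos p => gpow a (Pos.to_nat p)
  | Zneg p => ginv (gpow a (Pos.to_nat p))
  end.

Definition gcomm {G : Group} (a b : G) : G :=
  gmul (gmul (ginv a) (ginv b)) (gmul a b).

Definition is_hom {G H : Group} (f : G -> H) : Prop :=
  forall a b, f (gmul a b) = gmul (f a) (f b).

Inductive gen {G : Group} (S : G -> Prop) : G -> Prop :=
| gen_in : forall a, S a -> gen S a
| gen_one : gen S gone
| gen_mul : forall a b, gen S a -> gen S b -> gen S (gmul a b)
| gen_inv : forall a, gen S a -> gen S (ginv a).

Fixpoint derived {G : Group} (n : nat) : G -> Prop :=
  match n with
  | O => fun _ => True
  | S m => gen (fun g => exists a b, derived m a /\ derived m b /\ g = gcomm a b)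
  end.

Definition solvable (G : Group) : Prop :=
  exists n, forall g : G, derived n g -> g = gone.

Definition is_subgroup {G : Group} (H : G -> Prop) : Prop :=
  H gone /\ (forall a b, H a -> H b -> H (gmul a b)) /\ (forall a, H a -> H (ginv a)).

Definition polycyclic (G : Group) : Prop :=
  exists (n : nat) (H : nat -> G -> Prop),
    (forall g, H 0 g) /\
    (forall g, H n g <-> g = gone) /\
    (forall i, i < n -> is_subgroup (H i)) /\
    (forall i, i < n -> forall g, H (S i) g -> H i g) /\
    (forall i, i < n -> forall g h, H (S i) g -> H i h ->
        H (S i) (gmul (ginv h) (gmul g h))) /\
    (forall i, i < n -> exists t, H i t /\
        forall g, H i g -> exists m : Z, H (S i) (gmul (ginv (gzpow t m)) g)).

(* (G, x, y, z) is a presentation of < x, y, z | x^j = e, y^k = e, xy = z^l >,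
   characterised by its universal property. *)
Definition presents (j k l : nat) (G : Group) (x y z : G) : Prop :=
  gpow x j = gone /\ gpow y k = gone /\ gmul x y = gpow z l /\
  forall (H : Group) (a b c : H),
    gpow a j = gone -> gpow b k = gone -> gmul a b = gpow c l ->
    exists f : G -> H, is_hom f /\ f x = a /\ f y = b /\ f z = c /\
      forall f' : G -> H, is_hom f' -> f' x = a -> f' y = b -> f' z = c ->
        forall w, f' w = f w.

(* Main.v *)
Require Import Defs.
From Stdlib Require Import ZArith Lia List FunctionalExtensionality ProofIrrelevance.
Import ListNotations.

Section GL.
Variable G : Group.
Implicit Types a b c : G.
Lemma mulVr : forall a : G, gmul a (ginv a) = gone.
Proof.
  intro a.
  rewrite <- (gmul_1l _ (gmul a (ginv a))).
  rewrite <- (gmul_Vl _ (ginv a)) at 1.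
  rewrite <- gmul_assoc, (gmul_assoc _ (ginv a) a), gmul_Vl, gmul_1l.
  apply gmul_Vl.
Qed.
Lemma mul1r : forall a : G, gmul a gone = a.
Proof. intro a. rewrite <- (gmul_Vl _ a), gmul_assoc, mulVr, gmul_1l. reflexivity. Qed.
Lemma mulKl : forall a b : G, gmul (ginv a) (gmul a b) = b.
Proof. intros. rewrite gmul_assoc, gmul_Vl, gmul_1l. reflexivity. Qed.
Lemma mulKr : forall a b : G, gmul a (gmul (ginv a) b) = b.
Proof. intros. rewrite gmul_assoc, mulVr, gmul_1l. reflexivity. Qed.
Lemma inv_uniq : forall a b : G, gmul a b = gone -> a = ginv b.
Proof. intros a b H. rewrite <- (mul1r a), <- (mulVr b), gmul_assoc, H, gmul_1l. reflexivity. Qed.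
Lemma inv_inv : forall a : G, ginv (ginv a) = a.
Proof. intro a. symmetry. apply inv_uniq. apply mulVr. Qed.
Lemma inv_mul : forall a b : G, ginv (gmul a b) = gmul (ginv b) (ginv a).
Proof. intros. symmetry. apply inv_uniq.
  rewrite <- gmul_assoc, (gmul_assoc _ (ginv a)), gmul_Vl, gmul_1l, gmul_Vl. reflexivity. Qed.
Lemma inv_one : ginv (gone : G) = gone.
Proof. symmetry. apply inv_uniq. apply gmul_1l. Qed.
Lemma mul_cancel_l : forall a b c : G, gmul a b = gmul a c -> b = c.
Proof. intros a b c H. rewrite <- (mulKl a b), H, mulKl. reflexivity. Qed.
Lemma gpow_add : forall (a : G) m n, gpow a (m + n) = gmul (gpow a m) (gpow a n).
Proof. intros a m n. induction m; simpl. now rewrite gmul_1l. now rewrite IHm, gmul_assoc. Qed.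
Lemma gpow_comm : forall (a : G) n, gmul a (gpow a n) = gmul (gpow a n) a.
Proof. intros a n. induction n; simpl. now rewrite gmul_1l, mul1r.
  now rewrite <- gmul_assoc, <- IHn. Qed.
End GL.

Section Hom.
Variables G H : Group.
Variable f : G -> H.
Hypothesis hf : is_hom f.
Lemma hom_one : f gone = gone.
Proof. apply (mul_cancel_l _ (f gone)). rewrite <- hf, !mul1r. reflexivity. Qed.
Lemma hom_inv : forall a, f (ginv a) = ginv (f a).
Proof. intro a. apply inv_uniq. rewrite <- hf, gmul_Vl. apply hom_one. Qed.
Lemma hom_pow : forall a n, f (gpow a n) = gpow (f a) n.
Proof. intros a n. induction n; simpl. apply hom_one. now rewrite hf, IHn. Qed.
End Hom.

Record perm (A : Type) := mkperm {
  pf : A -> A; pg : A -> A;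
  pfg : forall x, pf (pg x) = x; pgf : forall x, pg (pf x) = x }.
Arguments mkperm {A}. Arguments pf {A}. Arguments pg {A}. Arguments pfg {A}. Arguments pgf {A}.

Lemma perm_eq {A} (p q : perm A) : (forall x, pf p x = pf q x) -> p = q.
Proof.
  intro H. destruct p as [f g fg gf], q as [f' g' fg' gf']; simpl in *.
  assert (f = f') by (apply functional_extensionality; auto). subst f'.
  assert (g = g').
  { apply functional_extensionality; intro x.
    rewrite <- (fg' x) at 1. rewrite gf. reflexivity. }
  subst g'. f_equal; apply proof_irrelevance.
Qed.

Definition pmul {A} (p q : perm A) : perm A.
Proof.
  refine (mkperm (fun x => pf p (pf q x)) (fun x => pg q (pg p x)) _ _);
  intro x; [rewrite pfg, pfg | rewrite pgf, pgf]; reflexivity.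
Defined.
Definition pinv {A} (p : perm A) : perm A := mkperm (pg p) (pf p) (pgf p) (pfg p).
Definition pone {A} : perm A := mkperm (fun x => x) (fun x => x) (fun _ => eq_refl) (fun _ => eq_refl).

Definition Sym (A : Type) : Group.
Proof.
  refine (Build_Group (perm A) pmul pinv pone _ _ _).
  - intros; apply perm_eq; reflexivity.
  - intros; apply perm_eq; reflexivity.
  - intros; apply perm_eq; intro x; simpl; apply pgf.
Defined.

Lemma pf_mul {A} (p q : Sym A) x : pf (gmul p q) x = pf p (pf q x).
Proof. reflexivity. Qed.
Lemma pf_inv {A} (p : Sym A) x : pf (ginv p) x = pg p x.
Proof. reflexivity. Qed.
Lemma pf_one {A} x : pf (gone : Sym A) x = x.
Proof. reflexivity. Qed.
Lemma pf_pow {A} (p : Sym A) n x : pf (gpow p n) x = Nat.iter n (pf p) x.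
Proof. induction n; simpl; [reflexivity| now rewrite <- IHn]. Qed.
Lemma pg_eq {A} (p : perm A) x y : pf p y = x -> pg p x = y.
Proof. intro H; subst; apply pgf. Qed.

Definition perm_of_order {A} (f : A -> A) (n : nat) (H : forall x, Nat.iter (S n) f x = x) : perm A.
Proof.
  refine (mkperm f (Nat.iter n f) _ _); intro x.
  - exact (H x).
  - rewrite <- (H x) at 2. simpl. clear H. induction n; simpl; [reflexivity|].
    f_equal. exact IHn.
Defined.

Lemma gen_mono {G : Group} (S1 S2 : G -> Prop) : (forall a, S1 a -> S2 a) -> forall a, gen S1 a -> gen S2 a.
Proof. intros H a Ha. induction Ha; [apply gen_in; auto|apply gen_one|apply gen_mul|apply gen_inv]; auto. Qed.

Lemma nonsolv_crit (G H : Group) (f : G -> H) (hf : is_hom f) (T : H -> Prop)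
  (HT : forall t, T t -> exists w, f w = t)
  (Hp : forall t, T t -> exists t1 t2, T t1 /\ T t2 /\ t = gcomm t1 t2)
  (t0 : H) (Ht0 : T t0) (Hne : t0 <> gone) : ~ solvable G.
Proof.
  assert (K : forall n t, T t -> exists w, derived n w /\ f w = t).
  { induction n; intros t Ht.
    - destruct (HT t Ht) as [w Hw]. exists w; split; [exact I|exact Hw].
    - destruct (Hp t Ht) as (t1 & t2 & H1 & H2 & ->).
      destruct (IHn t1 H1) as (w1 & D1 & E1). destruct (IHn t2 H2) as (w2 & D2 & E2).
      exists (gcomm w1 w2). split.
      + simpl. apply gen_in. exists w1, w2. auto.
      + unfold gcomm. rewrite !hf, !(hom_inv _ _ f hf), E1, E2. reflexivity. }
  intros [n Hn]. destruct (K n t0 Ht0) as (w & Dw & Ew).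
  apply Hne. rewrite <- Ew, (Hn w Dw). apply (hom_one _ _ f hf).
Qed.

Definition inrange {G H : Group} (f : G -> H) (h : H) := exists w, f w = h.
Lemma inrange_mul {G H : Group} (f : G -> H) (hf : is_hom f) a b :
  inrange f a -> inrange f b -> inrange f (gmul a b).
Proof. intros [w1 <-] [w2 <-]. exists (gmul w1 w2). apply hf. Qed.
Lemma inrange_inv {G H : Group} (f : G -> H) (hf : is_hom f) a :
  inrange f a -> inrange f (ginv a).
Proof. intros [w <-]. exists (ginv w). apply (hom_inv _ _ f hf). Qed.
Lemma inrange_conj {G H : Group} (f : G -> H) (hf : is_hom f) a b :
  inrange f a -> inrange f b -> inrange f (gmul (gmul a b) (ginv a)).
Proof. intros. apply inrange_mul; auto. apply inrange_mul; auto. apply inrange_inv; auto. Qed.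

Open Scope bool_scope.

Definition l5 := [0;1;2;3;4]%nat.
Definition mul5 (s t : list nat) : list nat := map (fun i => nth (nth i t 0) s 0) l5.
Definition P5 := (list nat * list nat)%type.
Definition pmul5 (p q : P5) : P5 := (mul5 (fst p) (fst q), mul5 (snd q) (snd p)).
Definition pinv5 (p : P5) : P5 := (snd p, fst p).
Definition pid5 : P5 := (l5, l5).
Definition ok5 (p : P5) : bool :=
  forallb (fun i => (nth i (fst p) 0 <? 5) && (nth i (snd p) 0 <? 5) &&
     (nth (nth i (snd p) 0) (fst p) 0 =? i) && (nth (nth i (fst p) 0) (snd p) 0 =? i))%nat l5.

Lemma forall_l5 (P : nat -> bool) : forallb P l5 = true -> forall i, (i < 5)%nat -> P i = true.
Proof. intros H i Hi. simpl in H. rewrite !Bool.andb_true_iff in H.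
  destruct H as (?&?&?&?&?&_). do 5 (destruct i as [|i]; [assumption|]). lia. Qed.

Lemma ok5_spec p : ok5 p = true -> forall i, (i < 5)%nat ->
  (nth i (fst p) 0 < 5 /\ nth i (snd p) 0 < 5 /\
   nth (nth i (snd p) 0) (fst p) 0 = i /\ nth (nth i (fst p) 0) (snd p) 0 = i)%nat.
Proof. intros H i Hi. pose proof (forall_l5 _ H i Hi) as K. simpl in K.
  rewrite !Bool.andb_true_iff, !Nat.ltb_lt, !Nat.eqb_eq in K. tauto. Qed.

Lemma nth_mul5 s t i : (i < 5)%nat -> nth i (mul5 s t) 0 = nth (nth i t 0) s 0.
Proof. intro Hi. do 5 (destruct i as [|i]; [reflexivity|]). lia. Qed.

Lemma ok5_mul p q : ok5 p = true -> ok5 q = true -> ok5 (pmul5 p q) = true.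
Proof.
  intros Hp Hq. unfold ok5. apply forallb_forall. intros i Hi.
  assert (Hi' : (i < 5)%nat) by (simpl in Hi; lia).
  destruct (ok5_spec q Hq i Hi') as (q1&q2&q3&q4).
  destruct (ok5_spec p Hp _ q1) as (p1&p2&p3&p4).
  destruct (ok5_spec p Hp i Hi') as (p1'&p2'&p3'&p4').
  destruct (ok5_spec q Hq _ p2') as (q1'&q2'&q3'&q4').
  unfold pmul5; simpl fst; simpl snd.
  repeat (rewrite nth_mul5 by lia).
  rewrite q3', p3', p4, q4.
  rewrite !Bool.andb_true_iff, !Nat.ltb_lt, !Nat.eqb_eq. lia.
Qed.

Definition psif (m : Z) (s : list nat) (x : Z) : Z :=
  if ((m <=? x) && (x <=? m + 4))%Z then (m + Z.of_nat (nth (Z.to_nat (x - m)) s 0%nat))%Z else x.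

Lemma psif_in m s i : (i < 5)%nat -> psif m s (m + Z.of_nat i) = (m + Z.of_nat (nth i s 0%nat))%Z.
Proof. intro Hi. unfold psif. replace (m + Z.of_nat i - m)%Z with (Z.of_nat i) by lia.
  rewrite Nat2Z.id. replace ((m <=? m + Z.of_nat i) && (m + Z.of_nat i <=? m + 4))%Z with true; [reflexivity|].
  symmetry. rewrite Bool.andb_true_iff, !Z.leb_le. lia. Qed.
Lemma psif_out m s x : (x < m \/ m + 4 < x)%Z -> psif m s x = x.
Proof. intro H. unfold psif. replace ((m <=? x) && (x <=? m + 4))%Z with false; [reflexivity|].
  symmetry. apply Bool.andb_false_iff. destruct H; [left|right]; apply Z.leb_gt; lia. Qed.
Lemma block_cases m x : (x < m \/ m + 4 < x)%Z \/ exists i, (i < 5)%nat /\ x = (m + Z.of_nat i)%Z.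
Proof. destruct (Z_lt_dec x m); [left; left; lia|]. destruct (Z_lt_dec (m+4) x); [left; right; lia|].
  right. exists (Z.to_nat (x - m)). split; lia. Qed.

Lemma psif_inv m p : ok5 p = true -> forall x, psif m (fst p) (psif m (snd p) x) = x.
Proof. intros H x. destruct (block_cases m x) as [Ho | (i & Hi & ->)].
  - rewrite !(psif_out _ _ x Ho); reflexivity.
  - destruct (ok5_spec p H i Hi) as (h1&h2&h3&h4). rewrite !psif_in by lia. now rewrite h3. Qed.

Definition Psi0 (m : Z) (p : P5) (H : ok5 p = true) : perm Z :=
  mkperm (psif m (fst p)) (psif m (snd p)) (psif_inv m p H) (psif_inv m (pinv5 p) (ltac:(
    unfold ok5 in *; rewrite forallb_forall in *; intros i Hi; specialize (H i Hi);
    simpl in *; rewrite !Bool.andb_true_iff in *; tauto))).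

Definition Psi (m : Z) (p : P5) : Sym Z :=
  match ok5 p as b return ok5 p = b -> Sym Z with
  | true => fun H => Psi0 m p H
  | false => fun _ => gone
  end eq_refl.

Lemma Psi_pf m p x : ok5 p = true -> pf (Psi m p) x = psif m (fst p) x.
Proof. intro H. unfold Psi. generalize (@eq_refl bool (ok5 p)). pattern (ok5 p) at 2 3.
  rewrite H. intros. reflexivity. Qed.

Lemma psif_comp m s t x : (forall i, (i < 5)%nat -> nth i t 0 < 5)%nat ->
  psif m (mul5 s t) x = psif m s (psif m t x).
Proof. intros Ht. destruct (block_cases m x) as [Ho | (i & Hi & ->)].
  - rewrite !(psif_out _ _ x Ho); reflexivity.
  - rewrite !psif_in by auto. rewrite nth_mul5 by auto. reflexivity. Qed.

Lemma Psi_mul m p q : ok5 p = true -> ok5 q = true -> Psi m (pmul5 p q) = gmul (Psi m p) (Psi m q).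
Proof. intros Hp Hq. apply perm_eq. intro x. rewrite pf_mul, !Psi_pf; auto using ok5_mul.
  simpl. apply psif_comp. intros i Hi. apply (ok5_spec q Hq i Hi). Qed.

Lemma ok5_inv p : ok5 p = true -> ok5 (pinv5 p) = true.
Proof. unfold ok5; rewrite !forallb_forall; intros H i Hi; specialize (H i Hi);
    simpl in *; rewrite !Bool.andb_true_iff in *; tauto. Qed.

Lemma Psi_inv m p : ok5 p = true -> Psi m (pinv5 p) = ginv (Psi m p).
Proof. intros Hp. apply perm_eq. intro x. rewrite pf_inv, !Psi_pf; auto using ok5_inv.
  unfold Psi. generalize (@eq_refl bool (ok5 p)). pattern (ok5 p) at 2 3.
  rewrite Hp. intros. reflexivity. Qed.

Lemma ok5_id : ok5 pid5 = true. Proof. reflexivity. Qed.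
Lemma Psi_id m : Psi m pid5 = gone.
Proof. apply perm_eq. intro x. rewrite Psi_pf by reflexivity. simpl fst.
  destruct (block_cases m x) as [Ho | (i & Hi & ->)].
  - rewrite (psif_out _ _ x Ho); reflexivity.
  - rewrite psif_in by auto. do 5 (destruct i as [|i]; [reflexivity|]). lia. Qed.

Fixpoint pow5 (p : P5) (n : nat) : P5 := match n with O => pid5 | S n => pmul5 p (pow5 p n) end.
Lemma ok5_pow p n : ok5 p = true -> ok5 (pow5 p n) = true.
Proof. intro H; induction n; simpl; [reflexivity| apply ok5_mul; auto]. Qed.
Lemma Psi_pow m p n : ok5 p = true -> Psi m (pow5 p n) = gpow (Psi m p) n.
Proof. intro H; induction n; simpl. apply Psi_id. rewrite Psi_mul by auto using ok5_pow. now rewrite IHn. Qed.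

Fixpoint leqb (s t : list nat) : bool := match s, t with
 | [], [] => true | a::s, b::t => Nat.eqb a b && leqb s t | _, _ => false end.
Lemma leqb_eq s t : leqb s t = true -> s = t.
Proof. revert t; induction s; destruct t; simpl; try discriminate; auto.
  rewrite Bool.andb_true_iff, Nat.eqb_eq. intros [-> H]. f_equal; auto. Qed.
Definition peqb (p q : P5) := leqb (fst p) (fst q).
Lemma Psi_peqb m p q : ok5 p = true -> ok5 q = true -> peqb p q = true -> Psi m p = Psi m q.
Proof. intros Hp Hq E. apply perm_eq. intro x. rewrite !Psi_pf by auto. apply leqb_eq in E. now rewrite E. Qed.
Definition memb (p : P5) (L : list P5) := existsb (peqb p) L.

Open Scope bool_scope.

Definition addnew (L : list P5) (x : P5) := if memb x L then L else x :: L.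
Definition pconj5 (h s : P5) := pmul5 (pmul5 h s) (pinv5 h).
Definition cands (gens conjs S : list P5) :=
  flat_map (fun g => map (pmul5 g) S) gens ++ flat_map (fun h => map (pconj5 h) S) conjs.
Definition step gens conjs S := fold_left addnew (cands gens conjs S) S.
Fixpoint clos gens conjs n := match n with O => gens | S n => step gens conjs (clos gens conjs n) end.

Lemma fold_addnew (P : P5 -> Prop) L S : (forall x, In x L -> P x) -> (forall x, In x S -> P x) ->
  forall x, In x (fold_left addnew L S) -> P x.
Proof. revert S; induction L; simpl; intros S HL HS; auto.
  apply IHL; auto. intros x Hx. unfold addnew in Hx. destruct (memb a S); auto.
  destruct Hx; subst; auto. Qed.

Lemma clos_ind (P : P5 -> Prop) gens conjs :
  (forall g, In g gens -> P g) ->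
  (forall g s, In g gens -> P s -> P (pmul5 g s)) ->
  (forall h s, In h conjs -> P s -> P (pconj5 h s)) ->
  forall n x, In x (clos gens conjs n) -> P x.
Proof. intros H1 H2 H3 n. induction n; simpl; auto.
  unfold step. apply fold_addnew; auto. unfold cands. intros x Hx.
  apply in_app_or in Hx. destruct Hx as [Hx|Hx]; apply in_flat_map in Hx; destruct Hx as (g & Hg & Hx);
  apply in_map_iff in Hx; destruct Hx as (s & <- & Hs); auto. Qed.

Definition c3 (a b c : nat) : P5 :=
  let f := fun i => if Nat.eqb i a then b else if Nat.eqb i b then c else if Nat.eqb i c then a else i in
  (map f l5, map (fun i => if Nat.eqb i a then c else if Nat.eqb i b then a else if Nat.eqb i c then b else i) l5).
Definition tr (a b : nat) : P5 :=
  let f := fun i => if Nat.eqb i a then b else if Nat.eqb i b then a else i in (map f l5, map f l5).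

Definition A5 := clos [c3 0 1 2; c3 2 3 4] [] 6.
Definition pcomm5 p q := pmul5 (pmul5 (pinv5 p) (pinv5 q)) (pmul5 p q).
Definition perfect_check (L : list P5) :=
  forallb (fun t => existsb (fun t1 => existsb (fun t2 => peqb (pcomm5 t1 t2) t) L) L) L.
Definition incl_check (L M : list P5) := forallb (fun t => memb t M) L.

Lemma A5_ok : forallb ok5 A5 = true. Proof. vm_compute. reflexivity. Qed.
Lemma A5_perfect : perfect_check A5 = true. Proof. vm_compute. reflexivity. Qed.
Lemma A5_t0 : In (c3 0 1 2) A5. Proof. vm_compute. tauto. Qed.

Lemma memb_In p L : memb p L = true -> exists q, In q L /\ peqb p q = true.
Proof. unfold memb. rewrite existsb_exists. auto. Qed.

Lemma psi_crit_gen (L : list P5) (Lok : forallb ok5 L = true) (Lp : perfect_check L = true)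
  (t0 : P5) (Lt0 : In t0 L)
  (G H : Group) (f : G -> H) (hf : is_hom f) (F : Sym Z -> H) (hF : is_hom F)
  m gens conjs n
  (Hg : forall g, In g gens -> ok5 g = true /\ inrange f (F (Psi m g)))
  (Hc : forall h, In h conjs -> ok5 h = true /\
     (forall s, inrange f (F s) -> inrange f (F (gmul (gmul (Psi m h) s) (ginv (Psi m h))))))
  (Hi : incl_check L (clos gens conjs n) = true)
  (Hne : F (Psi m t0) <> gone) : ~ solvable G.
Proof.
  assert (HC : forall x, In x (clos gens conjs n) -> ok5 x = true /\ inrange f (F (Psi m x))).
  { apply clos_ind; auto.
    - intros g s Hgi [Hs1 Hs2]. destruct (Hg g Hgi) as [Hg1 Hg2]. split. apply ok5_mul; auto.
      rewrite Psi_mul, hF by auto. apply inrange_mul; auto.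
    - intros h s Hh [Hs1 Hs2]. destruct (Hc h Hh) as [Hh1 Hh2]. unfold pconj5. split.
      apply ok5_mul; auto using ok5_mul, ok5_inv.
      rewrite !Psi_mul, Psi_inv by auto using ok5_mul, ok5_inv. apply Hh2; auto. }
  pose proof Lok as Hok. rewrite forallb_forall in Hok.
  apply (nonsolv_crit G H f hf (fun t => exists s, In s L /\ t = F (Psi m s))) with (t0 := F (Psi m t0)).
  - intros t (s & Hs & ->). unfold incl_check in Hi. rewrite forallb_forall in Hi.
    destruct (memb_In _ _ (Hi s Hs)) as (q & Hq & E). destruct (HC q Hq) as [Hq1 Hq2].
    rewrite (Psi_peqb m s q); auto.
  - intros t (s & Hs & ->). pose proof Lp as P. unfold perfect_check in P.
    rewrite forallb_forall in P. specialize (P s Hs). rewrite existsb_exists in P.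
    destruct P as (t1 & H1 & P). rewrite existsb_exists in P. destruct P as (t2 & H2 & E).
    exists (F (Psi m t1)), (F (Psi m t2)). split; [exists t1; split; [exact H1|reflexivity]|].
    split; [exists t2; split; [exact H2|reflexivity]|].
    assert (O1 := Hok t1 H1). assert (O2 := Hok t2 H2).
    assert (Oc : ok5 (pcomm5 t1 t2) = true) by (unfold pcomm5; apply ok5_mul; apply ok5_mul; auto using ok5_inv).
    rewrite <- (Psi_peqb m _ _ Oc (Hok s Hs) E).
    unfold pcomm5, gcomm. rewrite !Psi_mul by (try apply ok5_mul; auto using ok5_inv).
    rewrite !Psi_inv by auto. rewrite !hF, !(hom_inv _ _ F hF). reflexivity.
  - exists t0. split; [exact Lt0|reflexivity].
  - exact Hne.
Qed.

Lemma psi_crit (G H : Group) (f : G -> H) (hf : is_hom f) (F : Sym Z -> H) (hF : is_hom F)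
  m gens conjs n
  (Hg : forall g, In g gens -> ok5 g = true /\ inrange f (F (Psi m g)))
  (Hc : forall h, In h conjs -> ok5 h = true /\
     (forall s, inrange f (F s) -> inrange f (F (gmul (gmul (Psi m h) s) (ginv (Psi m h))))))
  (Hi : incl_check A5 (clos gens conjs n) = true)
  (Hne : F (Psi m (c3 0 1 2)) <> gone) : ~ solvable G.
Proof. exact (psi_crit_gen A5 A5_ok A5_perfect _ A5_t0 G H f hf F hF m gens conjs n Hg Hc Hi Hne). Qed.

Open Scope Z_scope.

Definition cyc3f (p q r x : Z) : Z :=
  if Z.eq_dec x p then q else if Z.eq_dec x q then r else if Z.eq_dec x r then p else x.
Definition swapf (p q x : Z) : Z := if Z.eq_dec x p then q else if Z.eq_dec x q then p else x.

Lemma comm3 (u v : Sym Z) (s : Z)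
  (Hs : forall x, x <> s -> pf u x = x \/ pf v x = x)
  (Hu : pf u s <> s) (Hv : pf v s <> s) :
  forall x, pf (gmul (gmul u v) (gmul (ginv u) (ginv v))) x = cyc3f s (pf u s) (pf v s) x.
Proof.
  assert (injU : forall a b, pf u a = pf u b -> a = b).
  { intros a b E. rewrite <- (pgf u a), <- (pgf u b), E. reflexivity. }
  assert (injV : forall a b, pf v a = pf v b -> a = b).
  { intros a b E. rewrite <- (pgf v a), <- (pgf v b), E. reflexivity. }
  assert (Us : pf u (pf u s) <> pf u s) by (intro E; apply injU in E; auto).
  assert (Vs : pf v (pf v s) <> pf v s) by (intro E; apply injV in E; auto).
  assert (Hvu : pf v (pf u s) = pf u s).
  { destruct (Z.eq_dec (pf u s) s) as [E|E]; [contradiction|].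
    destruct (Hs _ E); [contradiction|auto]. }
  assert (Huv : pf u (pf v s) = pf v s).
  { destruct (Z.eq_dec (pf v s) s) as [E|E]; [contradiction|].
    destruct (Hs _ E); [auto|contradiction]. }
  assert (D1 : pf u s <> pf v s).
  { intro E. apply Vs. rewrite <- E at 1. rewrite Hvu. exact E. }
  intro x. rewrite !pf_mul, !pf_inv. unfold cyc3f.
  destruct (Z.eq_dec x s) as [->|n1].
  - set (y := pg v s). assert (Ey : pf v y = s) by apply pfg.
    assert (Ny : y <> s) by (intro E; apply Hv; rewrite <- E at 1; rewrite Ey; auto).
    assert (Uy : pf u y = y) by (destruct (Hs y Ny); auto; congruence).
    rewrite (pg_eq u y y Uy), Ey. reflexivity.
  - destruct (Z.eq_dec x (pf u s)) as [->|n2].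
    + rewrite (pg_eq v _ _ Hvu), pgf, Huv. reflexivity.
    + destruct (Z.eq_dec x (pf v s)) as [->|n3].
      * rewrite pgf. set (y := pg u s). assert (Ey : pf u y = s) by apply pfg.
        assert (Ny : y <> s) by (intro E; apply Hu; rewrite <- E at 1; rewrite Ey; auto).
        assert (Vy : pf v y = y) by (destruct (Hs y Ny); auto; congruence).
        rewrite Vy, Ey. reflexivity.
      * destruct (Hs x n1) as [Ux|Vx].
        -- destruct (Z.eq_dec (pf v x) x) as [Vx|Vx].
           ++ rewrite (pg_eq v x x Vx), (pg_eq u x x Ux), Vx, Ux. reflexivity.
           ++ set (y := pg v x). assert (Ey : pf v y = x) by apply pfg.
              assert (Ny : y <> s) by (intro E; apply n3; rewrite <- Ey, E; reflexivity).
              assert (Nyx : y <> x) by (intro E; apply Vx; rewrite <- E at 1; rewrite Ey; auto).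
              assert (Uy : pf u y = y).
              { destruct (Hs y Ny); auto. exfalso. apply Nyx. apply injV. rewrite Ey.
                assert (pf v x = x \/ True) by auto. 
                destruct (Hs x n1); [|contradiction].
                exfalso. apply Vx. 
                rewrite H in Ey. congruence. }
              rewrite (pg_eq u y y Uy), Ey, Ux. reflexivity.
        -- rewrite (pg_eq v x x Vx).
           destruct (Z.eq_dec (pf u x) x) as [Ux|Ux].
           ++ rewrite (pg_eq u x x Ux), Vx, Ux. reflexivity.
           ++ set (y := pg u x). assert (Ey : pf u y = x) by apply pfg.
              assert (Ny : y <> s) by (intro E; apply n2; rewrite <- Ey, E; reflexivity).
              assert (Nyx : y <> x) by (intro E; apply Ux; rewrite <- E at 1; rewrite Ey; auto).
              assert (Vy : pf v y = y).
              { destruct (Hs y Ny); auto. congruence. }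
              rewrite Vy, Ey. reflexivity.
Qed.

Lemma pg_iff (h : Sym Z) x p : pg h x = p <-> x = pf h p.
Proof. split; intro E. rewrite <- E, pfg; reflexivity. rewrite E, pgf; reflexivity. Qed.

Lemma conj_cyc3 (h S : Sym Z) p q r : (forall y, pf S y = cyc3f p q r y) ->
  forall x, pf (gmul (gmul h S) (ginv h)) x = cyc3f (pf h p) (pf h q) (pf h r) x.
Proof. intros HS x. rewrite !pf_mul, pf_inv, HS. unfold cyc3f.
  destruct (Z.eq_dec (pg h x) p) as [E|E]; apply pg_iff in E || (assert (x <> pf h p) by (intro F; apply E; apply pg_iff; auto));
  destruct (Z.eq_dec x (pf h p)); try contradiction; auto.
  destruct (Z.eq_dec (pg h x) q) as [E'|E']; apply pg_iff in E' || (assert (x <> pf h q) by (intro F; apply E'; apply pg_iff; auto));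
  destruct (Z.eq_dec x (pf h q)); try contradiction; auto.
  destruct (Z.eq_dec (pg h x) r) as [E''|E'']; apply pg_iff in E'' || (assert (x <> pf h r) by (intro F; apply E''; apply pg_iff; auto));
  destruct (Z.eq_dec x (pf h r)); try contradiction; auto. apply pfg. Qed.

Lemma conj_swap (h S : Sym Z) p q : (forall y, pf S y = swapf p q y) ->
  forall x, pf (gmul (gmul h S) (ginv h)) x = swapf (pf h p) (pf h q) x.
Proof. intros HS x. rewrite !pf_mul, pf_inv, HS. unfold swapf.
  destruct (Z.eq_dec (pg h x) p) as [E|E]; apply pg_iff in E || (assert (x <> pf h p) by (intro F; apply E; apply pg_iff; auto));
  destruct (Z.eq_dec x (pf h p)); try contradiction; auto.
  destruct (Z.eq_dec (pg h x) q) as [E'|E']; apply pg_iff in E' || (assert (x <> pf h q) by (intro F; apply E'; apply pg_iff; auto));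
  destruct (Z.eq_dec x (pf h q)); try contradiction; auto. apply pfg. Qed.

Lemma nth_map_l5 (f : nat -> nat) i : (i < 5)%nat -> nth i (map f l5) 0%nat = f i.
Proof. intro Hi. do 5 (destruct i as [|i]; [reflexivity|]). lia. Qed.

Lemma Psi_c3 m a b c : (a < 5)%nat -> (b < 5)%nat -> (c < 5)%nat -> a <> b -> b <> c -> a <> c ->
  ok5 (c3 a b c) = true ->
  forall x, pf (Psi m (c3 a b c)) x = cyc3f (m + Z.of_nat a) (m + Z.of_nat b) (m + Z.of_nat c) x.
Proof. intros Ha Hb Hc ab bc ac Hok x. rewrite Psi_pf by auto. unfold c3; cbn [fst].
  destruct (block_cases m x) as [Ho | (i & Hi & ->)].
  - rewrite (psif_out _ _ x Ho). unfold cyc3f.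
    repeat match goal with |- context [Z.eq_dec ?u ?v] => destruct (Z.eq_dec u v); [lia|] end. reflexivity.
  - rewrite psif_in, nth_map_l5 by auto. unfold cyc3f.
    destruct (Nat.eqb_spec i a); [subst; destruct (Z.eq_dec _ _); [reflexivity|lia]|].
    destruct (Z.eq_dec (m + Z.of_nat i) (m + Z.of_nat a)); [lia|].
    destruct (Nat.eqb_spec i b); [subst; destruct (Z.eq_dec _ _); [reflexivity|lia]|].
    destruct (Z.eq_dec (m + Z.of_nat i) (m + Z.of_nat b)); [lia|].
    destruct (Nat.eqb_spec i c); [subst; destruct (Z.eq_dec _ _); [reflexivity|lia]|].
    destruct (Z.eq_dec (m + Z.of_nat i) (m + Z.of_nat c)); [lia|]. reflexivity.
Qed.

Lemma Psi_tr m a b : (a < 5)%nat -> (b < 5)%nat -> a <> b -> ok5 (tr a b) = true ->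
  forall x, pf (Psi m (tr a b)) x = swapf (m + Z.of_nat a) (m + Z.of_nat b) x.
Proof. intros Ha Hb ab Hok x. rewrite Psi_pf by auto. unfold tr; cbn [fst].
  destruct (block_cases m x) as [Ho | (i & Hi & ->)].
  - rewrite (psif_out _ _ x Ho). unfold swapf.
    repeat match goal with |- context [Z.eq_dec ?u ?v] => destruct (Z.eq_dec u v); [lia|] end. reflexivity.
  - rewrite psif_in, nth_map_l5 by auto. unfold swapf.
    destruct (Nat.eqb_spec i a); [subst; destruct (Z.eq_dec _ _); [reflexivity|lia]|].
    destruct (Z.eq_dec (m + Z.of_nat i) (m + Z.of_nat a)); [lia|].
    destruct (Nat.eqb_spec i b); [subst; destruct (Z.eq_dec _ _); [reflexivity|lia]|].
    destruct (Z.eq_dec (m + Z.of_nat i) (m + Z.of_nat b)); [lia|]. reflexivity.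
Qed.

Open Scope Z_scope.

Definition Rf (n x : Z) : Z := if (0 <=? x) && (x <? n) then (x + 1) mod n else x.

Lemma Rf_in n x : 0 <= x < n -> Rf n x = (x + 1) mod n.
Proof. intro H. unfold Rf. replace ((0 <=? x) && (x <? n)) with true; [reflexivity|].
  symmetry; rewrite Bool.andb_true_iff, Z.leb_le, Z.ltb_lt; lia. Qed.
Lemma Rf_out n x : ~ (0 <= x < n) -> Rf n x = x.
Proof. intro H. unfold Rf. replace ((0 <=? x) && (x <? n)) with false; [reflexivity|].
  symmetry; rewrite Bool.andb_false_iff, Z.leb_gt, Z.ltb_ge; lia. Qed.

Lemma Rf_iter n x k : 0 <= x < n -> Nat.iter k (Rf n) x = (x + Z.of_nat k) mod n.
Proof. intro H. induction k; simpl Nat.iter.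
  - rewrite Z.add_0_r, Z.mod_small; auto.
  - rewrite IHk, Rf_in. rewrite Zplus_mod_idemp_l. f_equal. lia.
    apply Z.mod_pos_bound. lia. Qed.
Lemma Rf_iter_out n x k : ~ (0 <= x < n) -> Nat.iter k (Rf n) x = x.
Proof. intro H. induction k; simpl; auto. rewrite IHk. apply Rf_out; auto. Qed.

Lemma Rf_order n : 0 < n -> forall x, Nat.iter (S (Z.to_nat n - 1)) (Rf n) x = x.
Proof. intros Hn x. replace (S (Z.to_nat n - 1)) with (Z.to_nat n) by lia.
  destruct (Z_le_dec 0 x); [destruct (Z_lt_dec x n)|].
  - rewrite Rf_iter by lia. rewrite Z2Nat.id by lia.
    rewrite Z.add_mod, Z.mod_same, Z.add_0_r, !Z.mod_mod, Z.mod_small; lia.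
  - apply Rf_iter_out; lia.
  - apply Rf_iter_out; lia.
Qed.

Definition Rp (n : Z) (H : 0 < n) : Sym Z := perm_of_order (Rf n) _ (Rf_order n H).
Lemma Rp_pf n H x : pf (Rp n H) x = Rf n x. Proof. reflexivity. Qed.
Lemma Rp_order n H : gpow (Rp n H) (Z.to_nat n) = gone.
Proof. apply perm_eq. intro x. rewrite pf_pow. pose proof (Rf_order n H x).
  replace (S (Z.to_nat n - 1)) with (Z.to_nat n) in H0 by lia. exact H0. Qed.

Definition nu : Sym Z := mkperm Z.opp Z.opp Z.opp_involutive Z.opp_involutive.

Lemma gpow_conj (G : Group) (h a : G) n :
  gpow (gmul (gmul h a) (ginv h)) n = gmul (gmul h (gpow a n)) (ginv h).
Proof. induction n; simpl. now rewrite mul1r, mulVr.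
  rewrite IHn, !gmul_assoc, <- (gmul_assoc _ (gmul h a) (ginv h) h), gmul_Vl, mul1r. reflexivity. Qed.

Definition Bp (n : Z) (H : 0 < n) : Sym Z := gmul (gmul nu (Rp n H)) (ginv nu).
Lemma Bp_pf n H x : pf (Bp n H) x = - Rf n (- x). Proof. reflexivity. Qed.
Lemma Bp_order n H : gpow (Bp n H) (Z.to_nat n) = gone.
Proof. unfold Bp. rewrite gpow_conj, Rp_order, mul1r, mulVr. reflexivity. Qed.

Definition X := (nat * Z)%type.

Lemma iter_add {A} (f : A -> A) a b x : Nat.iter (a + b) f x = Nat.iter a f (Nat.iter b f x).
Proof. induction a; simpl; auto. now rewrite IHa. Qed.

Lemma iter_S {A} (f : A -> A) k x : Nat.iter (S k) f x = f (Nat.iter k f x).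
Proof. reflexivity. Qed.

Definition Df (l : nat) (g : Z -> Z) (p : X) : X :=
  let (i, y) := p in if (i <? l)%nat then (i, g y) else (i, y).
Definition D (l : nat) (g : Sym Z) : Sym X.
Proof. refine (mkperm (Df l (pf g)) (Df l (pg g)) _ _); intros [i y]; unfold Df;
  destruct (i <? l)%nat eqn:E; rewrite ?E; try rewrite pfg; try rewrite pgf; reflexivity. Defined.
Lemma D_pf l g i y : pf (D l g) (i, y) = if (i <? l)%nat then (i, pf g y) else (i, y).
Proof. reflexivity. Qed.

Definition Lf (g : Z -> Z) (p : X) : X := let (i, y) := p in if (i =? 0)%nat then (i, g y) else (i, y).
Definition Lc (g : Sym Z) : Sym X.
Proof. refine (mkperm (Lf (pf g)) (Lf (pg g)) _ _); intros [i y]; unfold Lf;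
  destruct (i =? 0)%nat eqn:E; rewrite ?E; try rewrite pfg; try rewrite pgf; reflexivity. Defined.
Lemma Lc_pf g i y : pf (Lc g) (i, y) = if (i =? 0)%nat then (i, pf g y) else (i, y).
Proof. reflexivity. Qed.

Lemma D_hom l : is_hom (D l).
Proof. intros g h. apply perm_eq. intros [i y]. rewrite pf_mul, !D_pf.
  destruct (i <? l)%nat eqn:E; rewrite D_pf, E; reflexivity. Qed.
Lemma Lc_hom : is_hom Lc.
Proof. intros g h. apply perm_eq. intros [i y]. rewrite pf_mul, !Lc_pf.
  destruct (i =? 0)%nat eqn:E; rewrite Lc_pf, E; reflexivity. Qed.

Definition Cf (l : nat) (e : Z -> Z) (p : X) : X :=
  let (i, y) := p in if (S i <? l)%nat then (S i, y) else if (i <? l)%nat then (0%nat, e y) else (i, y).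
Definition Cg (l : nat) (e' : Z -> Z) (p : X) : X :=
  let (i, y) := p in match i with
  | O => if (0 <? l)%nat then (l - 1, e' y)%nat else (0%nat, y)
  | S i' => if (S i' <? l)%nat then (i', y) else (S i', y) end.

Lemma Cfg l (e : Sym Z) p : Cf l (pf e) (Cg l (pg e) p) = p.
Proof. destruct p as [i y]. destruct i as [|i]; unfold Cg.
  - destruct (Nat.ltb_spec 0 l); unfold Cf.
    + destruct (Nat.ltb_spec (S (l-1)) l); [lia|]. destruct (Nat.ltb_spec (l-1) l); [|lia]. rewrite pfg; reflexivity.
    + destruct (Nat.ltb_spec 1 l); [lia|]. destruct (Nat.ltb_spec 0 l); [lia|]. reflexivity.
  - destruct (Nat.ltb_spec (S i) l); unfold Cf.
    + destruct (Nat.ltb_spec (S i) l); [reflexivity|lia].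
    + destruct (Nat.ltb_spec (S (S i)) l); [lia|]. destruct (Nat.ltb_spec (S i) l); [lia|]. reflexivity.
Qed.
Lemma Cgf l (e : Sym Z) p : Cg l (pg e) (Cf l (pf e) p) = p.
Proof. destruct p as [i y]. unfold Cf. destruct (Nat.ltb_spec (S i) l).
  - unfold Cg. destruct (Nat.ltb_spec (S i) l); [reflexivity|lia].
  - destruct (Nat.ltb_spec i l); unfold Cg.
    + destruct (Nat.ltb_spec 0 l); [|lia]. rewrite pgf. f_equal. lia.
    + destruct i as [|i]. destruct (Nat.ltb_spec 0 l); [lia|reflexivity].
      destruct (Nat.ltb_spec (S i) l); [lia|reflexivity].
Qed.
Definition C (l : nat) (e : Sym Z) : Sym X := mkperm (Cf l (pf e)) (Cg l (pg e)) (Cfg l e) (Cgf l e).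
Lemma C_pf l e i y : pf (C l e) (i, y) =
  if (S i <? l)%nat then (S i, y) else if (i <? l)%nat then (0%nat, pf e y) else (i, y).
Proof. reflexivity. Qed.

Lemma C_iter l e k i y : (i + k < l)%nat -> Nat.iter k (pf (C l e)) (i, y) = (i + k, y)%nat.
Proof. induction k; intro H. simpl. f_equal; lia.
  rewrite iter_S, IHk by lia. rewrite C_pf. destruct (S (i + k) <? l)%nat eqn:E. f_equal; lia.
  apply Nat.ltb_ge in E. lia. Qed.

Lemma C_pow l e : (1 <= l)%nat -> gpow (C l e) l = D l e.
Proof. intro Hl. apply perm_eq. intros [i y]. rewrite pf_pow, D_pf.
  destruct (i <? l)%nat eqn:E.
  - apply Nat.ltb_lt in E. assert (Hl' : l = (i + S (l - 1 - i))%nat) by lia.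
    transitivity (Nat.iter (i + S (l - 1 - i)) (pf (C l e)) (i, y)); [rewrite <- Hl'; reflexivity|].
    rewrite iter_add, iter_S. rewrite (C_iter l e (l - 1 - i) i y) by lia.
    rewrite C_pf. replace (i + (l - 1 - i))%nat with (l - 1)%nat by lia.
    destruct (S (l - 1) <? l)%nat eqn:E2; [apply Nat.ltb_lt in E2; lia|].
    destruct (l - 1 <? l)%nat eqn:E3; [|apply Nat.ltb_ge in E3; lia].
    rewrite (C_iter l e i 0 (pf e y)) by lia. reflexivity.
  - apply Nat.ltb_ge in E. clear Hl. induction l as [|k IH] using (fun P => nat_ind P); [reflexivity|].
    assert (Hk : forall n, Nat.iter n (pf (C (S k) e)) (i, y) = (i, y)).
    { induction n; [reflexivity|]. rewrite iter_S, IHn, C_pf.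
      destruct (S i <? S k)%nat eqn:E1; [apply Nat.ltb_lt in E1; lia|].
      destruct (i <? S k)%nat eqn:E2; [apply Nat.ltb_lt in E2; lia|]. reflexivity. }
    apply Hk.
Qed.

Lemma K2 l e g : (1 <= l)%nat ->
  gmul (gmul (gmul (C l e) (D l g)) (ginv (C l e))) (ginv (D l g)) =
  Lc (gmul (gmul (gmul e g) (ginv e)) (ginv g)).
Proof. intro Hl.
  set (w := gmul (gmul (gmul e g) (ginv e)) (ginv g)).
  assert (E : gmul (C l e) (D l g) = gmul (gmul (Lc w) (D l g)) (C l e)).
  { apply perm_eq. intros [i y]. rewrite !pf_mul, C_pf, D_pf.
    destruct (Nat.ltb_spec (S i) l).
    - destruct (Nat.ltb_spec i l); [|lia]. rewrite C_pf. destruct (Nat.ltb_spec (S i) l); [|lia].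
      rewrite D_pf. destruct (Nat.ltb_spec (S i) l); [|lia]. rewrite Lc_pf. reflexivity.
    - destruct (Nat.ltb_spec i l).
      + rewrite C_pf. destruct (Nat.ltb_spec (S i) l); [lia|]. destruct (Nat.ltb_spec i l); [|lia].
        rewrite D_pf. destruct (Nat.ltb_spec 0 l); [|lia]. rewrite Lc_pf. simpl.
        rewrite !pgf. reflexivity.
      + rewrite C_pf. destruct (Nat.ltb_spec (S i) l); [lia|]. destruct (Nat.ltb_spec i l); [lia|].
        rewrite D_pf. destruct (Nat.ltb_spec i l); [lia|]. rewrite Lc_pf.
        destruct (Nat.eqb_spec i 0); [lia|]. reflexivity. }
  rewrite E. rewrite <- !gmul_assoc, mulKr, mulVr, mul1r. reflexivity.
Qed.

Lemma K3 l h w : (1 <= l)%nat ->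
  gmul (gmul (D l h) (Lc w)) (ginv (D l h)) = Lc (gmul (gmul h w) (ginv h)).
Proof. intro Hl. apply perm_eq. intros [i y]. rewrite !pf_mul, pf_inv. simpl pg.
  unfold Df. destruct (Nat.ltb_spec i l).
  - rewrite Lc_pf, Lc_pf. destruct (Nat.eqb_spec i 0).
    + rewrite D_pf. destruct (Nat.ltb_spec i l); [|lia]. rewrite !pf_mul, pf_inv. reflexivity.
    + rewrite D_pf. destruct (Nat.ltb_spec i l); [|lia]. rewrite pfg. reflexivity.
  - rewrite !Lc_pf. destruct (Nat.eqb_spec i 0); [lia|]. rewrite D_pf. destruct (Nat.ltb_spec i l); [lia|]. reflexivity.
Qed.

Lemma D_one l : D l gone = gone.
Proof. apply perm_eq. intros [i y]. rewrite D_pf. destruct (i <? l)%nat; reflexivity. Qed.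

Lemma use_pres j k l (G : Group) (x y z : G) : presents j k l G x y z ->
  forall (H : Group) (a b c : H), gpow a j = gone -> gpow b k = gone -> gmul a b = gpow c l ->
  (forall f : G -> H, is_hom f -> inrange f a -> inrange f b -> inrange f c -> ~ solvable G) ->
  ~ solvable G.
Proof. intros (_&_&_&P) H a b c Ha Hb Hc K. destruct (P H a b c Ha Hb Hc) as (f & hf & fx & fy & fz & _).
  apply (K f hf); [exists x|exists y|exists z]; auto. Qed.

Lemma id_hom (H : Group) : is_hom (fun h : H => h). Proof. intros a b; reflexivity. Qed.

Lemma inrange_pow {G H : Group} (f : G -> H) (hf : is_hom f) a n : inrange f a -> inrange f (gpow a n).
Proof. intros [w <-]. exists (gpow w n). apply (hom_pow _ _ f hf). Qed.

Lemma Psi_ne m : pf (Psi m (c3 0 1 2)) m <> m.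
Proof. rewrite Psi_c3 by (try reflexivity; lia). unfold cyc3f.
  destruct (Z.eq_dec m (m + Z.of_nat 0)); [simpl; lia|]. lia. Qed.
Lemma Psi_ne1 m : Psi m (c3 0 1 2) <> gone.
Proof. intro E. apply (Psi_ne m). rewrite E. reflexivity. Qed.
Lemma Lc_ne1 m : Lc (Psi m (c3 0 1 2)) <> gone.
Proof. intro E. apply (Psi_ne m). assert (K := f_equal (fun p => pf p (0%nat, m)) E). simpl in K.
  injection K. auto. Qed.

Lemma swapf_ext p q p' q' x : p = p' -> q = q' -> swapf p q x = swapf p' q' x.
Proof. intros -> ->; reflexivity. Qed.
Lemma cyc3f_ext p q r p' q' r' x : p = p' -> q = q' -> r = r' -> cyc3f p q r x = cyc3f p' q' r' x.
Proof. intros -> -> ->; reflexivity. Qed.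

Lemma caseI (G : Group) (x y z : G) l : (4 <= l)%nat -> presents 2 2 l G x y z -> ~ solvable G.
Proof.
  intros Hl P.
  assert (Hn : (0 < Z.of_nat l)%Z) by lia.
  set (a := Psi (-1) (tr 0 1)). set (c := Rp (Z.of_nat l) Hn).
  assert (Ha2 : gpow a 2 = gone).
  { unfold a. rewrite <- Psi_pow by reflexivity. vm_compute pow5. apply Psi_id. }
  apply (use_pres _ _ _ G x y z P (Sym Z) a a c Ha2 Ha2).
  { transitivity (gpow a 2); [cbn [gpow]; rewrite mul1r; reflexivity|]. rewrite Ha2.
    pose proof (Rp_order _ Hn) as R. rewrite Nat2Z.id in R. unfold c. rewrite R. reflexivity. }
  intros f hf Ra _ Rc.
  assert (Cn : forall n, (n < 4)%nat -> inrange f (Psi (-1) (tr 0 (S n)))).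
  { intros n Hnl. assert (Hok : ok5 (tr 0 (S n)) = true) by (do 4 (destruct n as [|n]; [reflexivity|]); lia). replace (Psi (-1) (tr 0 (S n))) with (gmul (gmul (gpow c n) a) (ginv (gpow c n))).
    - apply inrange_conj; auto. apply inrange_pow; auto.
    - apply perm_eq. intro w. rewrite (conj_swap (gpow c n) a (-1) 0).
      + rewrite Psi_tr by (auto; lia). apply swapf_ext.
        * rewrite pf_pow. unfold c. change (pf (Rp _ Hn)) with (Rf (Z.of_nat l)). rewrite Rf_iter_out; lia.
        * rewrite pf_pow. unfold c. change (pf (Rp _ Hn)) with (Rf (Z.of_nat l)). rewrite Rf_iter by lia. rewrite Z.mod_small; lia.
      + intro v. unfold a. rewrite Psi_tr by (try reflexivity; lia). apply swapf_ext; lia. }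
  apply (psi_crit G (Sym Z) f hf (fun h => h) (id_hom _) (-1) [tr 0 1; tr 0 2; tr 0 3; tr 0 4] [] 8).
  - intros g Hg. simpl in Hg. destruct Hg as [<-|[<-|[<-|[<-|[]]]]]; split; try reflexivity;
      [apply (Cn 0%nat)|apply (Cn 1%nat)|apply (Cn 2%nat)|apply (Cn 3%nat)]; lia.
  - intros h [].
  - vm_compute. reflexivity.
  - apply Psi_ne1.
Qed.

Definition al1 : P5 := ([1;0;3;2;4], [1;0;3;2;4])%nat.

Lemma caseI3 (G : Group) (x y z : G) : presents 2 2 3 G x y z -> ~ solvable G.
Proof.
  intros P.
  set (a := Psi 0 al1). set (c := Psi 0 (c3 0 2 4)).
  assert (Ha2 : gpow a 2 = gone).
  { unfold a. rewrite <- Psi_pow by reflexivity. vm_compute pow5. apply Psi_id. }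
  apply (use_pres _ _ _ G x y z P (Sym Z) a a c Ha2 Ha2).
  { transitivity (gpow a 2); [cbn [gpow]; rewrite mul1r; reflexivity|]. rewrite Ha2.
    unfold c. rewrite <- Psi_pow by reflexivity. vm_compute pow5. symmetry; apply Psi_id. }
  intros f hf Ra _ Rc.
  apply (psi_crit G (Sym Z) f hf (fun h => h) (id_hom _) 0 [al1; c3 0 2 4] [] 12).
  - intros g Hg. simpl in Hg. destruct Hg as [<-|[<-|[]]]; split; try reflexivity; auto.
  - intros h [].
  - vm_compute. reflexivity.
  - apply Psi_ne1.
Qed.

Lemma copies (G : Group) (x y z : G) j k l (a0 b0 : Sym Z) : (1 <= l)%nat ->
  gpow a0 j = gone -> gpow b0 k = gone -> presents j k l G x y z ->
  (forall f : G -> Sym X, is_hom f ->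
    (forall g, inrange f (D l g) ->
       inrange f (Lc (gmul (gmul (gmul (gmul a0 b0) g) (ginv (gmul a0 b0))) (ginv g)))) ->
    (forall h w, inrange f (D l h) -> inrange f (Lc w) -> inrange f (Lc (gmul (gmul h w) (ginv h)))) ->
    inrange f (D l a0) -> inrange f (D l b0) -> ~ solvable G) -> ~ solvable G.
Proof.
  intros Hl Ha Hb P K.
  apply (use_pres _ _ _ G x y z P (Sym X) (D l a0) (D l b0) (C l (gmul a0 b0))).
  - rewrite <- (hom_pow _ _ _ (D_hom l)), Ha. apply D_one.
  - rewrite <- (hom_pow _ _ _ (D_hom l)), Hb. apply D_one.
  - rewrite C_pow by auto. symmetry. apply D_hom.
  - intros f hf Ra Rb Rc. apply (K f hf); auto.
    + intros g Rg. rewrite <- (K2 l) by auto. apply inrange_mul; auto. apply inrange_conj; auto.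
      apply inrange_inv; auto.
    + intros h w Rh Rw. rewrite <- (K3 l) by auto. apply inrange_conj; auto.
Qed.

Ltac ok5t := repeat match goal with
 | |- ok5 (pmul5 _ _) = true => apply ok5_mul
 | |- ok5 (pinv5 _) = true => apply ok5_inv
 | |- ok5 (pow5 _ _) = true => apply ok5_pow
 end; auto.

Definition gen_el (e a : P5) := pmul5 (pmul5 (pmul5 e a) (pinv5 e)) (pinv5 a).

Lemma caseConc (G : Group) (x y z : G) j k l (al be : P5) n : (1 <= l)%nat ->
  ok5 al = true -> ok5 be = true -> peqb (pow5 al j) pid5 = true -> peqb (pow5 be k) pid5 = true ->
  incl_check A5 (clos [gen_el (pmul5 al be) al; gen_el (pmul5 al be) be] [al; be] n) = true ->
  presents j k l G x y z -> ~ solvable G.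
Proof.
  intros Hl Oa Ob Pa Pb Hi P.
  assert (Ha : gpow (Psi 0 al) j = gone).
  { rewrite <- Psi_pow by auto. rewrite <- (Psi_id 0). apply Psi_peqb; ok5t. }
  assert (Hb : gpow (Psi 0 be) k = gone).
  { rewrite <- Psi_pow by auto. rewrite <- (Psi_id 0). apply Psi_peqb; ok5t. }
  apply (copies G x y z j k l _ _ Hl Ha Hb P).
  intros f hf R1 R2 Ra Rb.
  assert (Oe : ok5 (pmul5 al be) = true) by (apply ok5_mul; auto).
  assert (Og : forall g, ok5 g = true -> ok5 (gen_el (pmul5 al be) g) = true).
  { intros g Og. unfold gen_el. ok5t. }
  assert (Eg : forall g, ok5 g = true -> Psi 0 (gen_el (pmul5 al be) g) =
     gmul (gmul (gmul (gmul (Psi 0 al) (Psi 0 be)) (Psi 0 g)) (ginv (gmul (Psi 0 al) (Psi 0 be)))) (ginv (Psi 0 g))).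
  { intros g Og'. unfold gen_el. rewrite !Psi_mul by ok5t. rewrite !Psi_inv by ok5t. rewrite !Psi_mul by ok5t. reflexivity. }
  apply (psi_crit G (Sym X) f hf Lc Lc_hom 0 [gen_el (pmul5 al be) al; gen_el (pmul5 al be) be] [al; be] n).
  - intros g Hg. simpl in Hg. destruct Hg as [<-|[<-|[]]]; (split; [apply Og; auto|]);
      rewrite Eg by auto; apply R1; auto.
  - intros h Hh. simpl in Hh. destruct Hh as [<-|[<-|[]]]; (split; [auto|]); intros s Rs; apply R2; auto.
  - exact Hi.
  - apply Lc_ne1.
Qed.

Definition be3 : P5 := c3 0 2 4.

Lemma case23 (G : Group) (x y z : G) l : (1 <= l)%nat -> presents 2 3 l G x y z -> ~ solvable G.
Proof. intros Hl P. apply (caseConc G x y z 2 3 l al1 be3 12); auto; vm_compute; reflexivity. Qed.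
Lemma case32 (G : Group) (x y z : G) l : (1 <= l)%nat -> presents 3 2 l G x y z -> ~ solvable G.
Proof. intros Hl P. apply (caseConc G x y z 3 2 l be3 al1 12); auto; vm_compute; reflexivity. Qed.

Definition Good {G : Group} (f : G -> Sym X) (p q r : Z) :=
  exists S : Sym Z, inrange f (Lc S) /\ forall w, pf S w = cyc3f p q r w.

Lemma Good_conj {G : Group} (f : G -> Sym X) l (h : Sym Z) p q r :
  (forall h w, inrange f (D l h) -> inrange f (Lc w) -> inrange f (Lc (gmul (gmul h w) (ginv h)))) ->
  inrange f (D l h) -> Good f p q r -> Good f (pf h p) (pf h q) (pf h r).
Proof. intros R2 Rh (S & RS & HS). exists (gmul (gmul h S) (ginv h)). split; auto.
  apply conj_cyc3; auto. Qed.

Lemma Good_psi {G : Group} (f : G -> Sym X) m a b c :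
  (a < 5)%nat -> (b < 5)%nat -> (c < 5)%nat -> a <> b -> b <> c -> a <> c -> ok5 (c3 a b c) = true ->
  Good f (m + Z.of_nat a) (m + Z.of_nat b) (m + Z.of_nat c) -> inrange f (Lc (Psi m (c3 a b c))).
Proof. intros ? ? ? ? ? ? Ho (S & RS & HS). replace (Psi m (c3 a b c)) with S; auto.
  apply perm_eq. intro w. rewrite HS, Psi_c3; auto. Qed.

Lemma Good_ext {G : Group} (f : G -> Sym X) p q r p' q' r' :
  p = p' -> q = q' -> r = r' -> Good f p q r -> Good f p' q' r'.
Proof. intros -> -> ->; auto. Qed.

Lemma caseII (G : Group) (x y z : G) j k l : (2 <= j)%nat -> (2 <= k)%nat -> (1 <= l)%nat ->
  ((3 <= j)%nat /\ (3 <= k)%nat \/ (4 <= j)%nat /\ k = 2%nat \/ j = 2%nat /\ (4 <= k)%nat) ->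
  presents j k l G x y z -> ~ solvable G.
Proof.
  intros Hj Hk Hl Hc P.
  assert (Hj' : (0 < Z.of_nat j)%Z) by lia. assert (Hk' : (0 < Z.of_nat k)%Z) by lia.
  set (a0 := Rp _ Hj'). set (b0 := Bp _ Hk').
  assert (Ea : forall w, pf a0 w = Rf (Z.of_nat j) w) by reflexivity.
  assert (Eb : forall w, pf b0 w = - Rf (Z.of_nat k) (- w)) by reflexivity.
  assert (Ha : gpow a0 j = gone) by (pose proof (Rp_order _ Hj') as R; rewrite Nat2Z.id in R; exact R).
  assert (Hb : gpow b0 k = gone) by (pose proof (Bp_order _ Hk') as R; rewrite Nat2Z.id in R; exact R).
  apply (copies G x y z j k l a0 b0 Hl Ha Hb P).
  intros f hf R1 R2 Ra Rb.
  assert (a00 : pf a0 0 = 1) by (rewrite Ea, Rf_in by lia; apply Z.mod_small; lia).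
  assert (b00 : pf b0 0 = -1) by (rewrite Eb, Rf_in by lia; rewrite Z.mod_small; lia).
  assert (G0 : Good f 0 1 (-1)).
  { exists (gmul (gmul a0 b0) (gmul (ginv a0) (ginv b0))). split.
    - replace (gmul (gmul a0 b0) (gmul (ginv a0) (ginv b0))) with
        (gmul (gmul (gmul (gmul a0 b0) b0) (ginv (gmul a0 b0))) (ginv b0)); [apply R1; auto|].
      rewrite inv_mul, !gmul_assoc, <- (gmul_assoc _ (gmul a0 b0) b0 (ginv b0)), mulVr, mul1r. reflexivity.
    - intro w. rewrite comm3 with (s := 0).
      + rewrite a00, b00. reflexivity.
      + intros v Hv. rewrite Ea, Eb. destruct (Z_le_dec 0 v).
        * right. rewrite Rf_out by lia. lia.
        * left. apply Rf_out. lia.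
      + lia.
      + lia. }
  assert (Ca : forall p q r, Good f p q r -> Good f (pf a0 p) (pf a0 q) (pf a0 r)) by (intros; apply Good_conj with l; auto).
  assert (Cb : forall p q r, Good f p q r -> Good f (pf b0 p) (pf b0 q) (pf b0 r)) by (intros; apply Good_conj with l; auto).
  assert (GP : forall m a b c p q r, (a < 5)%nat -> (b < 5)%nat -> (c < 5)%nat -> a <> b -> b <> c -> a <> c ->
     ok5 (c3 a b c) = true -> Good f p q r -> p = m + Z.of_nat a -> q = m + Z.of_nat b -> r = m + Z.of_nat c ->
     ok5 (c3 a b c) = true /\ inrange f (Lc (Psi m (c3 a b c)))).
  { intros. split; auto. apply Good_psi; auto. eapply Good_ext; eauto. }
  destruct Hc as [[Hj3 Hk3]|[[Hj4 Hk2]|[Hj2 Hk4]]].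
  - assert (a1 : pf a0 1 = 2) by (rewrite Ea, Rf_in by lia; apply Z.mod_small; lia).
    assert (am1 : pf a0 (-1) = -1) by (rewrite Ea, Rf_out by lia; reflexivity).
    assert (b1 : pf b0 1 = 1) by (rewrite Eb, Rf_out by lia; reflexivity).
    assert (bm1 : pf b0 (-1) = -2) by (rewrite Eb; simpl; rewrite Rf_in by lia; rewrite Z.mod_small; lia).
    pose proof (Ca _ _ _ G0) as G1. pose proof (Cb _ _ _ G0) as G2.
    apply (psi_crit G (Sym X) f hf Lc Lc_hom (-2) [c3 2 3 1; c3 3 4 1; c3 1 3 0] [] 12).
    + intros g Hg. simpl in Hg. destruct Hg as [<-|[<-|[<-|[]]]].
      * apply (GP (-2) 2%nat 3%nat 1%nat 0 1 (-1)); auto; try reflexivity; lia.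
      * apply (GP (-2) 3%nat 4%nat 1%nat (pf a0 0) (pf a0 1) (pf a0 (-1))); auto; try reflexivity; rewrite ?a00, ?a1, ?am1, ?b00, ?b1, ?bm1; lia.
      * apply (GP (-2) 1%nat 3%nat 0%nat (pf b0 0) (pf b0 1) (pf b0 (-1))); auto; try reflexivity; rewrite ?a00, ?a1, ?am1, ?b00, ?b1, ?bm1; lia.
    + intros h [].
    + vm_compute; reflexivity.
    + apply Lc_ne1.
  - assert (a1 : pf a0 1 = 2) by (rewrite Ea, Rf_in by lia; apply Z.mod_small; lia).
    assert (a2 : pf a0 2 = 3) by (rewrite Ea, Rf_in by lia; apply Z.mod_small; lia).
    assert (am1 : pf a0 (-1) = -1) by (rewrite Ea, Rf_out by lia; reflexivity).
    pose proof (Ca _ _ _ G0) as G1. pose proof (Ca _ _ _ G1) as G2.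
    apply (psi_crit G (Sym X) f hf Lc Lc_hom (-1) [c3 1 2 0; c3 2 3 0; c3 3 4 0] [] 12).
    + intros g Hg. simpl in Hg. destruct Hg as [<-|[<-|[<-|[]]]].
      * apply (GP (-1) 1%nat 2%nat 0%nat 0 1 (-1)); auto; try reflexivity; lia.
      * apply (GP (-1) 2%nat 3%nat 0%nat (pf a0 0) (pf a0 1) (pf a0 (-1))); auto; try reflexivity; rewrite ?a00, ?a1, ?a2, ?am1; lia.
      * apply (GP (-1) 3%nat 4%nat 0%nat (pf a0 (pf a0 0)) (pf a0 (pf a0 1)) (pf a0 (pf a0 (-1)))); auto; try reflexivity; rewrite ?a00, ?a1, ?a2, ?am1; lia.
    + intros h [].
    + vm_compute; reflexivity.
    + apply Lc_ne1.
  - assert (b1 : pf b0 1 = 1) by (rewrite Eb, Rf_out by lia; reflexivity).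
    assert (bm1 : pf b0 (-1) = -2) by (rewrite Eb; simpl; rewrite Rf_in by lia; rewrite Z.mod_small; lia).
    assert (bm2 : pf b0 (-2) = -3) by (rewrite Eb; simpl; rewrite Rf_in by lia; rewrite Z.mod_small; lia).
    pose proof (Cb _ _ _ G0) as G1. pose proof (Cb _ _ _ G1) as G2.
    apply (psi_crit G (Sym X) f hf Lc Lc_hom (-3) [c3 3 4 2; c3 2 4 1; c3 1 4 0] [] 12).
    + intros g Hg. simpl in Hg. destruct Hg as [<-|[<-|[<-|[]]]].
      * apply (GP (-3) 3%nat 4%nat 2%nat 0 1 (-1)); auto; try reflexivity; lia.
      * apply (GP (-3) 2%nat 4%nat 1%nat (pf b0 0) (pf b0 1) (pf b0 (-1))); auto; try reflexivity; rewrite ?b00, ?b1, ?bm1, ?bm2; lia.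
      * apply (GP (-3) 1%nat 4%nat 0%nat (pf b0 (pf b0 0)) (pf b0 (pf b0 1)) (pf b0 (pf b0 (-1)))); auto; try reflexivity; rewrite ?b00, ?b1, ?bm1, ?bm2; lia.
    + intros h [].
    + vm_compute; reflexivity.
    + apply Lc_ne1.
Qed.

Close Scope Z_scope.
Local Open Scope Z_scope.

Section ZP.
Variable G : Group.

Lemma gzpow_nat (a : G) n : gzpow a (Z.of_nat n) = gpow a n.
Proof. destruct n; [reflexivity|]. simpl. rewrite SuccNat2Pos.id_succ. reflexivity. Qed.
Lemma gzpow_negnat (a : G) n : gzpow a (- Z.of_nat n) = ginv (gpow a n).
Proof. destruct n; simpl. symmetry; apply inv_one. rewrite SuccNat2Pos.id_succ. reflexivity. Qed.

Lemma gzpow_succ (a : G) m : gzpow a (Z.succ m) = gmul a (gzpow a m).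
Proof. destruct (Z_le_dec 0 m).
  - replace m with (Z.of_nat (Z.to_nat m)) by lia. rewrite <- Nat2Z.inj_succ, !gzpow_nat. reflexivity.
  - replace m with (- Z.of_nat (S (Z.to_nat (- m) - 1))) by lia.
    replace (Z.succ (- Z.of_nat (S (Z.to_nat (- m) - 1)))) with (- Z.of_nat (Z.to_nat (- m) - 1)) by lia.
    rewrite !gzpow_negnat. set (n0 := (Z.to_nat (- m) - 1)%nat). simpl gpow.
    rewrite inv_mul. rewrite gmul_assoc.
    assert (C : gmul a (ginv (gpow a n0)) = gmul (ginv (gpow a n0)) a).
    { apply (mul_cancel_l _ (gpow a n0)). rewrite gmul_assoc, <- gpow_comm, <- gmul_assoc, mulVr, mul1r.
      rewrite gmul_assoc, mulVr, gmul_1l. reflexivity. }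
    rewrite C, <- gmul_assoc, mulVr, mul1r. reflexivity.
Qed.
Lemma gzpow_pred (a : G) m : gzpow a (Z.pred m) = gmul (ginv a) (gzpow a m).
Proof. rewrite <- (Z.succ_pred m) at 2. rewrite gzpow_succ, mulKl. reflexivity. Qed.

Lemma gzpow_add (a : G) m n : gzpow a (m + n) = gmul (gzpow a m) (gzpow a n).
Proof. revert n. induction m using Z.peano_ind; intro n.
  - simpl. now rewrite gmul_1l.
  - rewrite Z.add_succ_l, !gzpow_succ, IHm. apply gmul_assoc.
  - rewrite Z.add_pred_l, !gzpow_pred, IHm. apply gmul_assoc.
Qed.
Lemma gzpow_opp (a : G) m : gzpow a (- m) = ginv (gzpow a m).
Proof. apply inv_uniq. rewrite <- gzpow_add. replace (-m + m)%Z with 0%Z by lia. reflexivity. Qed.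
Lemma gzpow_1 (a : G) : gzpow a 1 = a.
Proof. simpl. apply mul1r. Qed.

Lemma gzpow_gen (S : G -> Prop) (a : G) m : gen S a -> gen S (gzpow a m).
Proof. intro Ha. assert (K : forall n, gen S (gpow a n)).
  { induction n; simpl; [apply gen_one|apply gen_mul; auto]. }
  destruct m; simpl; [apply gen_one|auto|apply gen_inv; auto]. Qed.

Lemma gen_cyclic (a g : G) : gen (fun w => w = a) g -> exists m, g = gzpow a m.
Proof. intro H. induction H.
  - exists 1%Z. subst. symmetry; apply gzpow_1.
  - exists 0%Z. reflexivity.
  - destruct IHgen1 as [m1 ->], IHgen2 as [m2 ->]. exists (m1 + m2)%Z. symmetry; apply gzpow_add.
  - destruct IHgen as [m ->]. exists (- m)%Z. symmetry; apply gzpow_opp.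
Qed.

Definition conjg (h g : G) := gmul (gmul (ginv h) g) h.
Definition Nrm (S : G -> Prop) (h : G) :=
  (forall g, gen S g -> gen S (conjg h g)) /\ (forall g, gen S g -> gen S (conjg (ginv h) g)).

Lemma conjg_hom (h : G) : is_hom (conjg h).
Proof. intros a b. unfold conjg. rewrite !gmul_assoc. f_equal.
  rewrite <- !gmul_assoc. f_equal. f_equal. rewrite gmul_assoc, mulVr, gmul_1l. reflexivity. Qed.

Lemma conj_gen (S : G -> Prop) (h : G) : (forall s, S s -> gen S (conjg h s)) -> forall g, gen S g -> gen S (conjg h g).
Proof. intros Hs g Hg. induction Hg.
  - auto.
  - unfold conjg. rewrite mul1r, gmul_Vl. apply gen_one.
  - rewrite conjg_hom. apply gen_mul; auto.
  - rewrite (hom_inv _ _ _ (conjg_hom h)). apply gen_inv; auto.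
Qed.

Lemma Nrm_gen_in (S : G -> Prop) (h : G) : gen S h -> Nrm S h.
Proof. intro Hh. split; intros g Hg; unfold conjg; repeat apply gen_mul; auto using gen_inv.
  Qed.

Lemma Nrm_closed (S T : G -> Prop) : (forall t, T t -> Nrm S t) -> forall h, gen T h -> Nrm S h.
Proof. intros HT h Hh. induction Hh.
  - auto.
  - split; intros g Hg; unfold conjg; rewrite ?inv_one, gmul_1l, mul1r; auto.
  - destruct IHHh1 as [A1 B1], IHHh2 as [A2 B2]. split; intros g Hg.
    + replace (conjg (gmul a b) g) with (conjg b (conjg a g)); auto.
      unfold conjg. rewrite inv_mul, !gmul_assoc. reflexivity.
    + replace (conjg (ginv (gmul a b)) g) with (conjg (ginv a) (conjg (ginv b) g)); auto.
      unfold conjg. rewrite !inv_inv, inv_mul, !gmul_assoc. reflexivity.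
  - destruct IHHh as [A B]. split; auto. rewrite inv_inv. auto.
Qed.

Lemma cyc_quot (S T : G -> Prop) (a : G) :
  (forall s, T s -> exists m, gen S (gmul (ginv (gzpow a m)) s)) ->
  (forall m, Nrm S (gzpow a m)) ->
  forall g, gen T g -> exists m, gen S (gmul (ginv (gzpow a m)) g).
Proof. intros HT HN g Hg. induction Hg.
  - auto.
  - exists 0%Z. simpl. rewrite inv_one, gmul_1l. apply gen_one.
  - destruct IHHg1 as [m1 H1], IHHg2 as [m2 H2]. exists (m1 + m2)%Z.
    rewrite gzpow_add, inv_mul.
    replace (gmul (gmul (ginv (gzpow a m2)) (ginv (gzpow a m1))) (gmul a0 b))
      with (gmul (conjg (gzpow a m2) (gmul (ginv (gzpow a m1)) a0)) (gmul (ginv (gzpow a m2)) b)).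
    + apply gen_mul; auto. apply (HN m2); auto.
    + unfold conjg. rewrite !gmul_assoc. rewrite <- (gmul_assoc _ _ (gzpow a m2) (ginv (gzpow a m2))), mulVr, mul1r.
      reflexivity.
  - destruct IHHg as [m Hm]. exists (- m)%Z. rewrite gzpow_opp, inv_inv.
    replace (gmul (gzpow a m) (ginv a0)) with (conjg (ginv (gzpow a m)) (ginv (gmul (ginv (gzpow a m)) a0))).
    + apply (HN m). apply gen_inv; auto.
    + unfold conjg. rewrite !inv_inv, inv_mul, inv_inv, !gmul_assoc.
      rewrite <- (gmul_assoc _ _ (gzpow a m) (ginv (gzpow a m))), mulVr, mul1r. reflexivity.
Qed.

End ZP.

Close Scope Z_scope.

Section Sub.
Variable G : Group.
Variable S : G -> Prop.
Definition SubT := {g : G | gen S g}.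
Lemma sub_eq (a b : SubT) : proj1_sig a = proj1_sig b -> a = b.
Proof. destruct a, b; simpl; intros ->; f_equal; apply proof_irrelevance. Qed.
Definition smul (a b : SubT) : SubT := exist _ _ (gen_mul S _ _ (proj2_sig a) (proj2_sig b)).
Definition sinv (a : SubT) : SubT := exist _ _ (gen_inv S _ (proj2_sig a)).
Definition sone : SubT := exist _ _ (gen_one S).
Definition SubG : Group.
Proof. refine (Build_Group SubT smul sinv sone _ _ _); intros; apply sub_eq; simpl.
  apply gmul_assoc. apply gmul_1l. apply gmul_Vl. Defined.
Lemma sub_pow (a : SubG) n : proj1_sig (gpow a n) = gpow (proj1_sig a) n.
Proof. induction n; simpl; auto. rewrite <- IHn. reflexivity. Qed.
End Sub.

Lemma pres_gen j k l (G : Group) (x y z : G) : presents j k l G x y z ->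
  forall g, gen (fun w => w = x \/ w = y \/ w = z) g.
Proof.
  intro P. pose proof P as (Px & Py & Pz & U).
  set (S0 := fun w => w = x \/ w = y \/ w = z).
  set (a := exist _ x (gen_in S0 x (or_introl eq_refl)) : SubG G S0).
  set (b := exist _ y (gen_in S0 y (or_intror (or_introl eq_refl))) : SubG G S0).
  set (c := exist _ z (gen_in S0 z (or_intror (or_intror eq_refl))) : SubG G S0).
  destruct (U (SubG G S0) a b c) as (f & hf & fx & fy & fz & _).
  - apply sub_eq. rewrite sub_pow. exact Px.
  - apply sub_eq. rewrite sub_pow. exact Py.
  - apply sub_eq. rewrite sub_pow. exact Pz.
  - destruct (U G x y z Px Py Pz) as (f0 & hf0 & _ & _ & _ & Uf0).
    intro g.
    assert (E1 : g = f0 g) by (apply (Uf0 (fun w => w)); auto; intros ? ?; reflexivity).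
    assert (E2 : proj1_sig (f g) = f0 g).
    { apply (Uf0 (fun w => proj1_sig (f w))).
      - intros u v. rewrite hf. reflexivity.
      - rewrite fx. reflexivity.
      - rewrite fy. reflexivity.
      - rewrite fz. reflexivity. }
    rewrite E1, <- E2. exact (proj2_sig (f g)).
Qed.

Lemma poly_solv (G : Group) : polycyclic G -> solvable G.
Proof.
  intros (n & H & H0 & Hn & Hsub & Hnest & Hnorm & Hcyc).
  assert (Cl : forall i, (i <= n)%nat -> H i gone /\ (forall a b, H i a -> H i b -> H i (gmul a b)) /\
                                        (forall a, H i a -> H i (ginv a))).
  { intros i Hi. destruct (Nat.eq_dec i n) as [->|Ne].
    - repeat split; intros; apply Hn; [reflexivity| |].
      + apply Hn in H1; apply Hn in H2; subst; apply gmul_1l.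
      + apply Hn in H1; subst; apply inv_one.
    - apply Hsub. lia. }
  assert (Pw : forall i t m, (i <= n)%nat -> H i t -> H i (gzpow t m)).
  { intros i t m Hi Ht. destruct (Cl i Hi) as (C1 & C2 & C3).
    assert (K : forall k, H i (gpow t k)) by (induction k; simpl; auto).
    destruct m; simpl; auto. }
  assert (Cm : forall i a b, (i < n)%nat -> H i a -> H i b -> H (S i) (gcomm a b)).
  { intros i a b Hi Ha Hb. destruct (Hcyc i Hi) as (t & Ht & Hg).
    destruct (Hg a Ha) as (m & Hm). destruct (Hg b Hb) as (p & Hp).
    destruct (Cl (S i) ltac:(lia)) as (C1 & C2 & C3).
    set (T := gzpow t m) in *. set (Q := gzpow t p) in *.
    set (n1 := gmul (ginv T) a) in *. set (n2 := gmul (ginv Q) b) in *.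
    assert (Ea : a = gmul T n1) by (unfold n1; rewrite mulKr; reflexivity).
    assert (Eb : b = gmul Q n2) by (unfold n2; rewrite mulKr; reflexivity).
    assert (CQ : gmul (ginv Q) T = gmul T (ginv Q)).
    { assert (gmul Q T = gmul T Q) by (unfold Q, T; rewrite <- !gzpow_add, Z.add_comm; reflexivity).
      apply (mul_cancel_l _ Q). rewrite gmul_assoc, mulVr, gmul_1l.
      rewrite gmul_assoc, H1, <- gmul_assoc, mulVr, mul1r. reflexivity. }
    assert (E : gcomm a b = gmul (gmul (gmul (ginv n1) (gmul (ginv T) (gmul (ginv n2) T)))
                                        (gmul (ginv Q) (gmul n1 Q))) n2).
    { unfold gcomm. rewrite Ea, Eb, !inv_mul, !gmul_assoc.
      rewrite <- (gmul_assoc _ _ (ginv Q) T), CQ, !gmul_assoc. reflexivity. }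
    rewrite E. apply C2; [apply C2; [apply C2|]|]; auto.
    - apply Hnorm; auto. apply Pw; auto; lia.
    - apply Hnorm; auto. apply Pw; auto; lia. }
  assert (D : forall i g, (i <= n)%nat -> derived i g -> H i g).
  { induction i; intros g Hi Hd. apply H0.
    destruct (Cl (S i) Hi) as (C1 & C2 & C3).
    simpl in Hd. induction Hd; auto.
    destruct H1 as (a0 & b0 & Ha & Hb & ->). apply Cm; [lia|apply IHi; auto; lia|apply IHi; auto; lia]. }
  exists n. intros g Hg. apply Hn. apply D; auto.
Qed.

Ltac gs := repeat (first [rewrite <- gmul_assoc | rewrite inv_mul | rewrite inv_inv | rewrite mulKl | rewrite mulKr
  | rewrite mulVr | rewrite gmul_Vl | rewrite gmul_1l | rewrite mul1r | rewrite inv_one]).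

Section S222.
Variable G : Group.
Variables x y z : G.
Hypothesis Px : gmul x x = gone.
Hypothesis Py : gmul y y = gone.
Hypothesis Pz : gmul x y = gmul z z.

Lemma xi : ginv x = x. Proof. symmetry; apply inv_uniq; exact Px. Qed.
Lemma yi : ginv y = y. Proof. symmetry; apply inv_uniq; exact Py. Qed.
Lemma xxK b : gmul x (gmul x b) = b. Proof. rewrite gmul_assoc, Px, gmul_1l. reflexivity. Qed.
Lemma yyK b : gmul y (gmul y b) = b. Proof. rewrite gmul_assoc, Py, gmul_1l. reflexivity. Qed.
Lemma zzK b : gmul z (gmul z b) = gmul x (gmul y b). Proof. rewrite !gmul_assoc, Pz. reflexivity. Qed.
Lemma xyzK b : gmul x (gmul y (gmul (ginv z) b)) = gmul z b.
Proof. rewrite !gmul_assoc, Pz, <- (gmul_assoc _ z z), mulVr, mul1r. reflexivity. Qed.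
Lemma xyz : gmul x (gmul y (ginv z)) = z.
Proof. rewrite gmul_assoc, Pz, <- gmul_assoc, mulVr, mul1r. reflexivity. Qed.

Lemma zt : gmul z (gmul x y) = gmul (gmul x y) z.
Proof. rewrite Pz, !gmul_assoc. reflexivity. Qed.
Lemma zixyK b : gmul (ginv z) (gmul x (gmul y b)) = gmul x (gmul y (gmul (ginv z) b)).
Proof. apply (mul_cancel_l _ z). rewrite mulKr. rewrite (gmul_assoc _ x y (gmul (ginv z) b)), (gmul_assoc _ z (gmul x y)), zt, <- gmul_assoc, mulKr, gmul_assoc. reflexivity. Qed.
Lemma zixy : gmul (ginv z) (gmul x y) = gmul x (gmul y (ginv z)).
Proof. rewrite <- (mul1r _ y) at 1. rewrite zixyK, mul1r. reflexivity. Qed.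

Lemma yx : gmul y x = ginv (gmul z z).
Proof. rewrite <- Pz, inv_mul, xi, yi. reflexivity. Qed.
Lemma zyx : gmul z (gmul y x) = gmul (gmul y x) z.
Proof. rewrite yx, inv_mul, mulKr, <- gmul_assoc, gmul_Vl, mul1r. reflexivity. Qed.
Lemma ziyxK b : gmul (ginv z) (gmul y (gmul x b)) = gmul y (gmul x (gmul (ginv z) b)).
Proof. apply (mul_cancel_l _ z). rewrite mulKr. rewrite (gmul_assoc _ y x (gmul (ginv z) b)), (gmul_assoc _ z (gmul y x)), zyx, <- gmul_assoc, mulKr, gmul_assoc. reflexivity. Qed.

Ltac gs2 := repeat (first [rewrite <- gmul_assoc | rewrite inv_mul | rewrite inv_inv | rewrite mulKl | rewrite mulKr
  | rewrite mulVr | rewrite gmul_Vl | rewrite gmul_1l | rewrite mul1r | rewrite inv_one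
  | rewrite xi | rewrite yi | rewrite xxK | rewrite yyK | rewrite Px | rewrite Py | rewrite zzK | rewrite <- Pz
  | rewrite xyzK | rewrite xyz | rewrite zixyK | rewrite zixy | rewrite ziyxK]).

Definition t := gmul x y.
Definition u := gmul x z.

Lemma e1 : conjg G x u = gmul t (ginv u). Proof. unfold conjg, t, u. gs2. reflexivity. Qed.
Lemma e2 : conjg G x t = ginv t. Proof. unfold conjg, t, u. gs2. reflexivity. Qed.
Lemma e3 : conjg G z u = gmul (ginv u) t. Proof. unfold conjg, t, u. gs2. reflexivity. Qed.
Lemma e4 : conjg G z t = t. Proof. unfold conjg, t, u. gs2. reflexivity. Qed.
Lemma e5 : conjg G (ginv z) u = gmul t (ginv u). Proof. unfold conjg, t, u. gs2. reflexivity. Qed.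
Lemma e6 : conjg G (ginv z) t = t. Proof. unfold conjg, t, u. gs2. reflexivity. Qed.
Lemma e7 : conjg G u t = ginv t. Proof. unfold conjg, t, u. gs2. reflexivity. Qed.
Lemma e8 : conjg G (ginv u) t = ginv t. Proof. unfold conjg, t, u. gs2. reflexivity. Qed.
Lemma e9 : y = gmul x t. Proof. unfold t. gs2. reflexivity. Qed.
End S222.

Lemma poly222 (G : Group) (x y z : G) : presents 2 2 2 G x y z -> polycyclic G.
Proof.
  intro P. pose proof (pres_gen _ _ _ G x y z P) as Gen.
  destruct P as (Px & Py & Pz & _). simpl in Px, Py, Pz. rewrite mul1r in Px, Py, Pz.
  set (T := t G x y). set (U := u G x z).
  set (S0 := fun w => w = x \/ w = y \/ w = z). set (S1 := fun w => w = U \/ w = T). set (S2 := fun w => w = T).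
  assert (gu : gen S1 U) by (apply gen_in; left; reflexivity).
  assert (gt : gen S1 T) by (apply gen_in; right; reflexivity).
  assert (gt2 : gen S2 T) by (apply gen_in; reflexivity).
  assert (Nx : Nrm G S1 x).
  { assert (K : forall g, gen S1 g -> gen S1 (conjg G x g)).
    { apply conj_gen. intros s [-> | ->].
      - unfold U. rewrite (e1 G x y z) by auto. apply gen_mul; auto. apply gen_inv; auto.
      - unfold T. rewrite (e2 G x y) by auto. apply gen_inv; auto. }
    split; auto. rewrite (xi G x Px). auto. }
  assert (Nz : Nrm G S1 z).
  { split; apply conj_gen; intros s [-> | ->]; unfold U, T.
    - rewrite (e3 G x y z) by auto. apply gen_mul; auto. apply gen_inv; auto.
    - rewrite (e4 G x y z) by auto. auto.
    - rewrite (e5 G x y z) by auto. apply gen_mul; auto. apply gen_inv; auto.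
    - rewrite (e6 G x y z) by auto. auto. }
  assert (Ny : Nrm G S1 y).
  { apply (Nrm_closed G S1 (fun w => w = x \/ w = T)).
    - intros w [-> | ->]; auto. apply Nrm_gen_in; auto.
    - rewrite (e9 G x y Px). apply gen_mul; apply gen_in; auto. }
  assert (N1 : forall h, Nrm G S1 h).
  { intro h. apply (Nrm_closed G S1 S0); [|apply Gen]. intros w [-> | [-> | ->]]; auto. }
  assert (N2 : forall h, gen S1 h -> Nrm G S2 h).
  { apply Nrm_closed. intros w [-> | ->].
    - split; apply conj_gen; intros s ->; unfold U, T.
      + rewrite (e7 G x y z) by auto. apply gen_inv; auto.
      + rewrite (e8 G x y z) by auto. apply gen_inv; auto.
    - apply Nrm_gen_in; auto. }
  exists 3%nat, (fun i => match i with 0 => fun _ => True | 1 => gen S1 | 2 => gen S2 | _ => fun g => g = gone end).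
  split; [intros; exact I|]. split; [intros; simpl; tauto|].
  split; [intros i Hi; destruct i as [|[|[|i]]]; try lia; repeat split; auto using gen_one, gen_mul, gen_inv|].
  split; [intros i Hi g; destruct i as [|[|[|i]]]; try lia; simpl; auto; [apply gen_mono; intros w ->; right; reflexivity | intros ->; apply gen_one]|].
  split.
  - intros i Hi g h; destruct i as [|[|[|i]]]; try lia; simpl; intros Hg Hh.
    + rewrite gmul_assoc. apply (N1 h); auto.
    + rewrite gmul_assoc. apply (N2 h); auto.
    + subst. rewrite gmul_1l, gmul_Vl. reflexivity.
  - intros i Hi; destruct i as [|[|[|i]]]; try lia.
    + exists x. split; [exact I|]. intros g _.
      apply (cyc_quot G S1 S0 x); auto.
      intros s [-> | [-> | ->]]; exists 1%Z; rewrite gzpow_1, (xi G x Px).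
      * rewrite Px. apply gen_one.
      * apply gen_in. right. reflexivity.
      * apply gen_in. left. reflexivity.
    + exists U. split; auto. intros g Hg.
      apply (cyc_quot G S2 S1 U); auto.
      * intros s [-> | ->]. exists 1%Z. rewrite gzpow_1, gmul_Vl. apply gen_one.
        exists 0%Z. simpl. rewrite inv_one, gmul_1l. auto.
      * intro m. apply N2. apply gzpow_gen. auto.
    + exists T. split; auto. intros g Hg. simpl.
      destruct (gen_cyclic G T g Hg) as [m ->]. exists m. apply gmul_Vl.
Qed.

Close Scope Z_scope.

Theorem proposition7p2 :
  forall (j k l : nat), 1 < j -> 1 < k -> 1 < l ->
  forall (G : Group) (x y z : G), presents j k l G x y z ->
    (solvable G <-> (j = 2 /\ k = 2 /\ l = 2)) /\
    (j = 2 -> k = 2 -> l = 2 -> polycyclic G).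
Proof.
  intros j k l Hj Hk Hl G x y z P.
  assert (NS : ~ (j = 2 /\ k = 2 /\ l = 2) -> ~ solvable G).
  { intro Hn.
    destruct (Nat.eq_dec j 2) as [Ej|Ej]; destruct (Nat.eq_dec k 2) as [Ek|Ek].
    - subst j k. destruct (Nat.eq_dec l 3) as [El|El].
      + subst l. apply (caseI3 G x y z P).
      + apply (caseI G x y z l); [lia|exact P].
    - subst j. destruct (Nat.eq_dec k 3) as [Ek3|Ek3].
      + subst k. apply (case23 G x y z l); [lia|exact P].
      + apply (caseII G x y z 2 k l); auto; lia.
    - subst k. destruct (Nat.eq_dec j 3) as [Ej3|Ej3].
      + subst j. apply (case32 G x y z l); [lia|exact P].
      + apply (caseII G x y z j 2 l); auto; lia.
    - apply (caseII G x y z j k l); auto; lia. }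
  split.
  - split.
    + intro S. destruct (Nat.eq_dec j 2), (Nat.eq_dec k 2), (Nat.eq_dec l 2); auto;
        exfalso; apply NS; auto; intros (?&?&?); lia.
    + intros (-> & -> & ->). apply poly_solv. apply (poly222 G x y z P).
  - intros -> -> ->. apply (poly222 G x y z P).
Qed.
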